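(* Let $A=[a_{ij}]$ be a real $n\times n$ matrix with zero diagonal and $f(\sigma)=\sum_{p=1}^{n-1}\sum_{q=p+1}^n a_{\sigma(p)\sigma(q)}$ its LOP objective function on $\Sigma_n$. Let $k\le n$, let $i_1,\dots,i_k\in\{1,\dots,n\}$ be distinct, and let $S=\{\sigma\in\Sigma_n:\sigma(1)=i_1,\dots,\sigma(k)=i_k\}$. Then $$\frac{1}{|S|}\sum_{\sigma\in S}f(\sigma)=\sum_{r=1}^{k}\ \sum_{j\in\{1,\dots,n\}\setminus\{i_1,\dots,i_r\}}a_{i_r j}+\frac12\sum_{l,m\in\{1,\dots,n\}\setminus\{i_1,\dots,i_k\}}a_{lm}.$$
   Context: $\Sigma_n$ is the symmetric group on $\{1,\dots,n\}$; $\sigma(p)$ is the row/column index placed in position $p$. *)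

(* Defs.v *)
From HB Require Import structures.
From mathcomp Require Import all_boot all_order all_fingroup all_algebra.
Set Implicit Arguments. Unset Strict Implicit. Unset Printing Implicit Defensive.
Import Order.TTheory GRing.Theory Num.Theory.
Local Open Scope ring_scope.

(* Conventions: indices are 0-based, {1..n} is 'I_n, Sigma_n is 'S_n.
   sigma p is the row/column index placed in position p. *)

Definition lop_obj (R : ringType) (n : nat) (A : 'M[R]_n) (s : 'S_n) : R :=
  \sum_(p < n) \sum_(q < n | (p < q)%N) A (s p) (s q).

Definition prefix_set (n k : nat) (hk : (k <= n)%N) (i : 'I_k -> 'I_n)
  : {set 'S_n} :=
  [set s : 'S_n | [forall r : 'I_k, s (widen_ord hk r) == i r]].

(* Main.v *)
Require Import Defs.
From HB Require Import structures.
From mathcomp Require Import all_boot all_order all_fingroup all_algebra.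
From mathcomp Require Import ring lra.
From mathcomp Require Import zify.
Import Order.TTheory GRing.Theory Num.Theory.
Local Open Scope ring_scope.
Set Implicit Arguments. Unset Strict Implicit.

Lemma prefP n k (hk : (k <= n)%N) (i : 'I_k -> 'I_n) (s : 'S_n) :
  s \in prefix_set hk i -> forall r, s (widen_ord hk r) = i r.
Proof. by rewrite inE => /forallP H r; apply/eqP/H. Qed.

Lemma mem_pref_le n k (hk : (k <= n)%N) (i : 'I_k -> 'I_n) (s : 'S_n)
  (Hs : s \in prefix_set hk i) (r : 'I_k) (q : 'I_n) :
  (s q \in [set i r' | r' : 'I_k & (r' <= r)%N]) = (q <= r)%N.
Proof.
have H := prefP Hs.
apply/imsetP/idP.
  case=> r'; rewrite inE => Hr; rewrite -H => /perm_inj ->. by [].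
move=> Hq; have qk : (q < k)%N by apply: leq_ltn_trans Hq _.
exists (Ordinal qk); first by rewrite inE.
rewrite -H; congr (s _); exact: val_inj.
Qed.

Lemma mem_pref_all n k (hk : (k <= n)%N) (i : 'I_k -> 'I_n) (s : 'S_n)
  (Hs : s \in prefix_set hk i) (q : 'I_n) :
  (s q \in [set i r | r : 'I_k]) = (q < k)%N.
Proof.
have H := prefP Hs.
apply/imsetP/idP.
  by case=> r' _; rewrite -H => /perm_inj -> /=.
move=> qk; exists (Ordinal qk) => //.
rewrite -H; congr (s _); exact: val_inj.
Qed.
Lemma pref_nonempty n k (hk : (k <= n)%N) (i : 'I_k -> 'I_n) (hi : injective i) :
  exists s, s \in prefix_set hk i.
Proof.
pose I := [set i r | r : 'I_k].
pose L := [seq i r | r <- enum 'I_k] ++ enum (~: I).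
have cI : #|I| = k by rewrite card_imset // card_ord.
have sL : size L = n.
  rewrite size_cat size_map size_enum_ord -cardE.
  by have := cardsC I; rewrite cI => ->; rewrite card_ord.
have uL : uniq L.
  rewrite cat_uniq (map_inj_uniq hi) enum_uniq enum_uniq /= andbT.
  apply/hasPn => x; rewrite mem_enum inE => Hx; apply/negP => /mapP [r _ Er].
  by move: Hx; rewrite Er imset_f.
pose f (p : 'I_n) := nth p L p.
have finj : injective f.
  move=> p q; rewrite /f (set_nth_default q p) ?sL // => /eqP.
  by rewrite nth_uniq ?sL // => /eqP /val_inj.
exists (perm finj); rewrite inE; apply/forallP => r; rewrite permE /f /=.
rewrite nth_cat size_map size_enum_ord ltn_ord (nth_map r) ?size_enum_ord //.
by rewrite nth_ord_enum.
Qed.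

Definition rhof n k (p : 'I_n) : 'I_n :=
  if (p < k)%N then p else insubd p (n.-1 + k - p)%N.

Lemma rhofK n k : (k <= n)%N -> involutive (@rhof n k).
Proof.
move=> hk p; apply: val_inj; rewrite /rhof.
have pn := ltn_ord p.
case pk: (p < k)%N; first by rewrite pk.
have v : nat_of_ord (insubd p (n.-1 + k - p)%N) = (n.-1 + k - p)%N.
  by rewrite -[nat_of_ord _]/(val _) val_insubd; case: ltnP => //; lia.
case: ltnP => h; first by move: h; rewrite v; move: pk; lia.
rewrite -[nat_of_ord _]/(val _) val_insubd v.
have -> : (n.-1 + k - (n.-1 + k - p) < n)%N by move: pk; lia.
have := prednK (leq_ltn_trans (leq0n _) pn).
move=> e; rewrite subKn //; move: pk pn e; clear; lia.
Qed.

Lemma rhof_val n k (p : 'I_n) :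
  nat_of_ord (@rhof n k p) = if (p < k)%N then (p : nat) else (n.-1 + k - p)%N.
Proof.
rewrite /rhof; case: ifP => // pk.
rewrite -[nat_of_ord _]/(val _) val_insubd.
have := ltn_ord p; have := prednK (leq_ltn_trans (leq0n _) (ltn_ord p)).
by case: ifP => //; move: pk; lia.
Qed.

Lemma rhof_lt n k (p : 'I_n) : ((@rhof n k p) < k)%N = (p < k)%N.
Proof.
rewrite rhof_val; case: ifP => // pk.
have := ltn_ord p; have := prednK (leq_ltn_trans (leq0n _) (ltn_ord p)).
by move: pk; lia.
Qed.

Lemma rhof_lt2 n k (p q : 'I_n) : ~~ (p < k)%N ->
  ((@rhof n k p) < (@rhof n k q))%N = (k <= q)%N && (q < p)%N.
Proof.
rewrite !rhof_val => /negbTE ->.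
have := ltn_ord p; have := ltn_ord q; have := prednK (leq_ltn_trans (leq0n _) (ltn_ord p)).
by case: ifP; lia.
Qed.

Unset Implicit Arguments.

Theorem proposition5 (R : realFieldType) (n : nat) (A : 'M[R]_n)
  (hdiag : forall j : 'I_n, A j j = 0)
  (k : nat) (hk : (k <= n)%N) (i : 'I_k -> 'I_n) (hi : injective i) :
  (#|prefix_set hk i|%:R)^-1 *
    (\sum_(s in prefix_set hk i) lop_obj A s)
  = \sum_(r < k) \sum_(j : 'I_n | j \notin [set i r' | r' : 'I_k & (r' <= r)%N])
        A (i r) j
    + 2^-1 * \sum_(l : 'I_n | l \notin [set i r | r : 'I_k])
             \sum_(m : 'I_n | m \notin [set i r | r : 'I_k]) A l m.
Proof.
set S := prefix_set hk i.
set T1 := \sum_(r < k) _.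
set C := \sum_(l : 'I_n | _) _.
pose g (s : 'S_n) := \sum_(p < n | ~~ (p < k)%N) \sum_(q < n | (p < q)%N) A (s p) (s q).
have step1 : forall s, s \in S -> lop_obj A s = T1 + g s.
  move=> s Hs; rewrite /lop_obj (bigID (fun p : 'I_n => (p < k)%N)) /=; congr (_ + _).
  have E := big_ord_narrow_cond (op := +%R) (idx := 0) (P := xpredT) (F := fun p : 'I_n => \sum_(q < n | (p < q)%N) A (s p) (s q)) hk.
  rewrite /= in E; rewrite E.
  rewrite /T1; apply: eq_bigr => r _.
  rewrite (prefP Hs) [RHS](reindex_inj (@perm_inj _ s)) /=; apply: eq_bigl => q.
  by rewrite (mem_pref_le Hs) ltnNge.
pose rho : 'S_n := perm (can_inj (rhofK hk)).
have rhoE p : rho p = rhof k p by rewrite permE.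
have rhoS s : ((rho * s)%g \in S) = (s \in S).
  rewrite !inE; apply: eq_forallb => r; rewrite permM rhoE /rhof /= ltn_ord.
  by [].
have step2 : \sum_(s in S) g s = \sum_(s in S) g (rho * s)%g.
  rewrite [LHS](reindex_inj (mulgI rho)) /=; apply: eq_bigl => s.
  by rewrite rhoS.
have step3 : forall s, s \in S -> g s + g (rho * s)%g = C.
  move=> s Hs.
  have e2 : g (rho * s)%g = \sum_(p < n | ~~ (p < k)%N)
      \sum_(q < n | (k <= q)%N && (q < p)%N) A (s p) (s q).
    rewrite /g (reindex_inj (@perm_inj _ rho)) /=.
    apply: eq_big => [p|p pk]; first by rewrite rhoE rhof_lt.
    rewrite (reindex_inj (@perm_inj _ rho)) /=.
    apply: eq_big => [q|q _]; first by move: pk; rewrite !rhoE rhof_lt => pk; rewrite rhof_lt2.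
    by rewrite !permM !rhoE !(rhofK hk).
  rewrite e2 /g -big_split /= /C [RHS](reindex_inj (@perm_inj _ s)) /=.
  apply: eq_big => [p|p pk]; first by rewrite (mem_pref_all Hs).
  rewrite [RHS](reindex_inj (@perm_inj _ s)) /=.
  transitivity (\sum_(q < n | ~~ (q < k)%N) A (s p) (s q)); last first.
    by apply: eq_bigl => q; rewrite (mem_pref_all Hs).
  rewrite [X in X + _]big_mkcond [X in _ + X]big_mkcond [RHS]big_mkcond -big_split /=.
  apply: eq_bigr => q _.
  have [h|h|h] := ltngtP p q.
  - have h1 : ((k <= q)%N && (q < p)%N) = false by move: pk; lia.
    have h2 : (~~ (q < k)%N) = true by move: pk; lia.
    by rewrite andbF h2 addr0.
  - by rewrite andbT -leqNgt add0r.
  - have e : p = q := val_inj h.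
    by rewrite -e andbF add0r hdiag; case: ifP.
rewrite (eq_bigr (fun s => T1 + g s) step1) big_split /= sumr_const.
have G2 : \sum_(s in S) g s + \sum_(s in S) g s = C *+ #|S|.
  rewrite {2}step2 -big_split /= -sumr_const; apply: eq_bigr => s Hs.
  exact: step3 s Hs.
have nz : (#|S|%:R : R) != 0.
  case: (pref_nonempty hk hi) => s Hs; rewrite pnatr_eq0 -lt0n.
  by apply/card_gt0P; exists s.
set G := \sum_(s in S) g s in G2 *.
have two : (2 : R) != 0 by rewrite pnatr_eq0.
have -> : G = 2^-1 * (C *+ #|S|) by rewrite -G2; field.
rewrite -mulr_natr; field.
by [].
Qed.
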